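(* Let $s_*\in\mathbb{R}$ and let $\gamma,\delta:[s_*,\infty)\to\mathbb{R}$ be functions with $|\gamma(s)|+|\delta(s)|\le\frac{C}{s^{10}}$ for some constant $C$. Let $\phi:[s_*,\infty)\to\mathbb{R}$ be a $C^1$ solution of $\phi'=(1+\phi^2)\Big(1+\gamma(s)-\big(\tfrac1s+\delta(s)\big)\phi\Big)$. Then $\phi(s)=s-\frac1s+O(s^{-2})$ as $s\to\infty$. *)

(* Defs.v *)
From Stdlib Require Export Reals.
Open Scope R_scope.

Definition ode_rhs (gamma delta : R -> R) (s y : R) : R :=
  (1 + y ^ 2) * (1 + gamma s - (1 / s + delta s) * y).

(* Main.v *)
Require Import Defs.
From Stdlib Require Import Reals Lra Psatz Classical.
Open Scope R_scope.

Lemma cont_eps (h : R -> R) x : continuity_pt h x -> forall eps, 0 < eps ->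
  exists del, 0 < del /\ forall y, Rabs (y - x) < del -> Rabs (h y - h x) < eps.
Proof.
  intros Hc eps He.
  unfold continuity_pt, continue_in, limit1_in, limit_in in Hc; simpl in Hc.
  destruct (Hc eps He) as [del [Hd H]].
  exists del; split; auto.
  intros y Hy.
  destruct (Req_dec y x) as [->|Hne].
  - rewrite Rminus_diag, Rabs_R0; auto.
  - apply H; split; [unfold D_x, no_cond; split; auto|]. exact Hy.
Qed.

Lemma first_zero (h : R -> R) b s : b < s ->
  (forall u, b <= u <= s -> continuity_pt h u) -> h b < 0 -> 0 <= h s ->
  exists z, b < z <= s /\ h z = 0 /\ forall u, b <= u < z -> h u < 0.
Proof.
  intros Hbs Hc Hb Hs.
  set (E := fun x => b <= x <= s /\ forall u, b <= u <= x -> h u < 0).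
  assert (HB : bound E) by (exists s; intros x [Hx _]; lra).
  assert (HE : exists x, E x).
  { exists b; split; [lra|]. intros u Hu. replace u with b by lra; auto. }
  destruct (completeness E HB HE) as [m [Hub Hlub]].
  assert (Hbm : b <= m) by (apply Hub; destruct HE; split; [lra|]; intros u Hu; replace u with b by lra; auto).
  assert (Hms : m <= s) by (apply Hlub; intros x [Hx _]; lra).
  assert (HA : forall u, b <= u < m -> h u < 0).
  { intros u Hu.
    destruct (classic (exists x, E x /\ u < x)) as [[x [[Hx1 Hx2] Hux]]|Hn].
    - apply Hx2; lra.
    - exfalso. assert (m <= u); [|lra].
      apply Hlub. intros x Hx. apply Rnot_lt_le. intro Hlt. apply Hn. exists x; auto. }
  assert (Hcm : continuity_pt h m) by (apply Hc; lra).
  destruct (Rtotal_order (h m) 0) as [Hneg|[Hz|Hpos]].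
  - exfalso.
    assert (Hms' : m < s) by (destruct (Req_dec m s) as [->|]; [lra|lra]).
    destruct (cont_eps h m Hcm (- h m) ltac:(lra)) as [del [Hd Hdel]].
    set (x0 := Rmin (m + del/2) s).
    assert (Hx0 : m < x0) by (unfold x0; apply Rmin_glb_lt; lra).
    assert (E x0).
    { split. unfold x0; split; [|apply Rmin_r]. apply Rmin_glb; lra.
      intros u Hu. destruct (Rlt_le_dec u m) as [Hl|Hl].
      - apply HA; lra.
      - assert (Rabs (u - m) < del).
        { assert (u <= m + del/2) by (apply Rle_trans with x0; [lra|apply Rmin_l]).
          rewrite Rabs_right; lra. }
        specialize (Hdel u H). apply Rabs_def2 in Hdel. lra. }
    specialize (Hub x0 H). lra.
  - exists m. split; [|split; auto].
    split; auto. destruct (Req_dec m b) as [->|]; [lra|lra].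
  - exfalso.
    assert (Hbm' : b < m) by (destruct (Req_dec m b) as [->|]; [lra|lra]).
    destruct (cont_eps h m Hcm (h m) Hpos) as [del [Hd Hdel]].
    set (u := Rmax b (m - del/2)).
    assert (Hu1 : b <= u) by apply Rmax_l.
    assert (Hu2 : u < m) by (unfold u; apply Rmax_lub_lt; lra).
    assert (Rabs (u - m) < del).
    { assert (m - del/2 <= u) by apply Rmax_r. rewrite Rabs_left; lra. }
    specialize (Hdel u H). apply Rabs_def2 in Hdel.
    specialize (HA u (conj Hu1 Hu2)). lra.
Qed.

Lemma deriv_contra (h : R -> R) b z dz : b < z -> derivable_pt_lim h z dz -> dz < 0 ->
  h z = 0 -> (forall u, b <= u < z -> h u < 0) -> False.
Proof.
  intros Hbz Hd Hdz Hz HA.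
  destruct (Hd (- dz / 2) ltac:(lra)) as [del Hdel].
  set (hh := - Rmin (del/2) ((z - b)/2)).
  assert (Hm1 : Rmin (del/2) ((z-b)/2) <= del/2) by apply Rmin_l.
  assert (Hm2 : Rmin (del/2) ((z-b)/2) <= (z-b)/2) by apply Rmin_r.
  assert (Hm0 : 0 < Rmin (del/2) ((z-b)/2)) by (apply Rmin_glb_lt; generalize (cond_pos del); lra).
  assert (Hhh : hh < 0) by (unfold hh; lra).
  assert (Habs : Rabs hh < del) by (rewrite Rabs_left; unfold hh; generalize (cond_pos del); lra).
  specialize (Hdel hh ltac:(lra) Habs).
  rewrite Hz in Hdel. apply Rabs_def2 in Hdel.
  assert (Hneg : h (z + hh) < 0) by (apply HA; unfold hh; lra).
  assert (Hq : 0 < (h (z + hh) - 0) / hh).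
  { unfold Rdiv. replace (h (z+hh) - 0) with (h (z+hh)) by ring.
    assert (/ hh < 0) by (apply Rinv_lt_0_compat; lra). nra. }
  lra.
Qed.

Lemma stay (h d : R -> R) b :
  (forall u, b <= u -> derivable_pt_lim h u (d u)) -> h b < 0 ->
  (forall u, b <= u -> h u = 0 -> d u < 0) -> forall s, b <= s -> h s < 0.
Proof.
  intros Hd Hb Hz s Hs.
  apply Rnot_le_lt; intro Hs0.
  destruct (Req_dec s b) as [->|Hne]; [lra|].
  destruct (first_zero h b s ltac:(lra)) as [z [Hz1 [Hz2 Hz3]]]; auto.
  - intros u Hu. apply derivable_continuous_pt. exists (d u). apply Hd; lra.
  - apply (deriv_contra h b z (d z)); [lra|apply Hd; lra|apply Hz; auto; lra|auto|auto].
Qed.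

Lemma trap (h d : R -> R) a :
  (forall u, a <= u -> derivable_pt_lim h u (d u)) ->
  (forall u, a <= u -> 0 <= h u -> d u <= -1) -> exists M, forall s, M <= s -> h s < 0.
Proof.
  intros Hd Hneg.
  set (S := a + Rabs (h a) + 1).
  destruct (classic (exists b, a <= b <= S /\ h b < 0)) as [[b [Hb1 Hb2]]|Hn].
  - exists b. apply (stay h d b); auto.
    + intros u Hu; apply Hd; lra.
    + intros u Hu Hz. specialize (Hneg u ltac:(lra) ltac:(lra)). lra.
  - exfalso.
    assert (Hall : forall u, a <= u <= S -> 0 <= h u).
    { intros u Hu. apply Rnot_lt_le. intro. apply Hn. exists u; auto. }
    assert (HaS : a < S) by (unfold S; generalize (Rabs_pos (h a)); lra).
    destruct (MVT_cor2 h d a S HaS) as [c [Hc1 Hc2]].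
    { intros c Hc; apply Hd; lra. }
    specialize (Hneg c ltac:(lra) (Hall c ltac:(lra))).
    specialize (Hall S ltac:(lra)).
    assert (h a <= Rabs (h a)) by apply Rle_abs.
    assert (d c * (S - a) <= -1 * (S - a)) by (apply Rmult_le_compat_r; lra).
    unfold S in *. lra.
Qed.

Lemma enter (P : R -> Prop) (th dth : R -> R) a :
  (forall u, a <= u -> derivable_pt_lim th u (dth u)) ->
  (forall u, -2 < th u < 2) ->
  (forall u, a <= u -> ~ P u -> 1/4 <= dth u) -> exists b, a <= b /\ P b.
Proof.
  intros Hd Hb Hg.
  destruct (classic (exists b, a <= b <= a + 20 /\ P b)) as [[b [Hb1 Hb2]]|Hn].
  - exists b; split; auto; lra.
  - exfalso.
    destruct (MVT_cor2 th dth a (a+20) ltac:(lra)) as [c [Hc1 Hc2]].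
    { intros c Hc; apply Hd; lra. }
    assert (1/4 <= dth c).
    { apply Hg; [lra|]. intro HP. apply Hn. exists c; split; auto; lra. }
    generalize (Hb a) (Hb (a+20)); intros. 
    replace (a + 20 - a) with 20 in Hc1 by ring. lra.
Qed.

Lemma Rabs_le_inv a b : Rabs a <= b -> - b <= a <= b.
Proof. intros H. generalize (Rle_abs a) (Rle_abs (-a)). rewrite Rabs_Ropp. lra. Qed.

Section Ar.
Variables (s g d e p : R).
Hypotheses (Hs : 1000 <= s) (Hg : Rabs g <= e) (Hd : Rabs d <= e) (He : e * s^5 <= 1/1000).

Lemma ebounds : 0 <= e /\ e * s <= 1/1000 /\ e * s^2 <= 1/1000 /\ e * s ^3 <= 1/1000
  /\ e * s^4 <= 1/1000 /\ e <= 1/1000.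
Proof.
  assert (0 <= e) by (generalize (Rabs_pos g); lra).
  assert (1 <= s) by lra.
  assert (1 <= s^2) by nra. assert (s^2 <= s^3) by (simpl; nra).
  assert (s <= s^2) by (simpl; nra).
  assert (s^3 <= s^4) by (simpl in *; nra). assert (s^4 <= s^5) by (simpl in *; nra).
  repeat split; try nra.
Qed.

Definition T := 1 + g - (/s + d) * p.

Lemma rfacts : 0 < /s /\ s * /s = 1 /\ /s <= 1/1000.
Proof.
  split; [apply Rinv_0_lt_compat; lra|]. split; [field; lra|].
  apply Rle_trans with (/1000); [apply Rinv_le_contravar; lra|lra].
Qed.

Lemma e_le : e <= /s / 1000.
Proof.
  destruct ebounds as (H0 & H1 & H2 & H3 & H4 & H5).
  destruct rfacts as (R0 & R1 & R2).
  apply Rmult_le_reg_r with s; [lra|].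
  replace (/ s / 1000 * s) with (s * /s / 1000) by (unfold Rdiv; ring). rewrite R1. lra.
Qed.

Lemma L1 : p <= s/2 -> 1/4 <= T.
Proof.
  intros Hp. generalize e_le; intro. destruct ebounds as (H0 & H1 & H2 & H3 & H4 & H5).
  destruct rfacts as (R0 & R1 & R2).
  apply Rabs_le_inv in Hg. apply Rabs_le_inv in Hd. unfold T.
  destruct (Rle_lt_dec p 0).
  - assert (0 <= /s + d) by lra.
    assert ((/s + d) * p <= 0) by nra. lra.
  - assert ((/s) * p <= 1/2) by nra.
    assert (d * p <= e * s) by nra. lra.
Qed.

Lemma L1' : p = s/2 -> 1/2 < (1 + p^2) * T.
Proof.
  intros Hp. assert (1/4 <= T) by (apply L1; lra).
  assert (1 + p^2 >= 2 * 1000) by (subst; nra). nra.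
Qed.

Lemma L2 : 2 * s <= p -> T <= -1/2.
Proof.
  intros Hp. destruct ebounds as (H0 & H1 & H2 & H3 & H4 & H5).
  destruct rfacts as (R0 & R1 & R2).
  apply Rabs_le_inv in Hg. apply Rabs_le_inv in Hd. unfold T.
  assert ((/s) * p >= 2) by nra.
  assert (d * p >= - e * p) by nra.
  assert (e * p <= (/s) * p / 1000).
  { assert (e <= /s / 1000). { assert (e * s <= 1/1000) by lra.
      apply Rmult_le_reg_r with s; [lra|]. 
      replace (/ s / 1000 * s) with (s * /s / 1000) by (unfold Rdiv; ring). rewrite R1. lra. }
    assert (0 <= p) by lra. unfold Rdiv. nra. }
  nra.
Qed.

Lemma L2' : p = 2 * s -> (1 + p^2) * T < 2.
Proof.
  intros Hp. assert (T <= -1/2) by (apply L2; lra).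
  assert (1 + p^2 >= 0) by nra. nra.
Qed.

Definition Gd := s^2 * ((1 + p^2) * T) + 2 * s * p - 3 * s^2 + 1.
Definition G := (p - s + /s) * s^2.

Lemma Gd_eq : Gd = - (p - s + /s) * ((1 + p^2) * s - p - 3 * s) - (p + s) * /s
   + s^2 * ((1 + p^2) * (g - d * p)).
Proof. unfold Gd, T. field. lra. Qed.

Lemma Ebound : s/2 < p < 2 * s -> Rabs (s^2 * ((1 + p^2) * (g - d * p))) <= 15/1000.
Proof.
  intros Hp. destruct ebounds as (H0 & H1 & H2 & H3 & H4 & H5).
  rewrite !Rabs_mult.
  assert (Rabs (g - d * p) <= e * (1 + 2 * s)).
  { unfold Rminus. eapply Rle_trans; [apply Rabs_triang|].
    rewrite Rabs_Ropp, Rabs_mult. rewrite (Rabs_right p) by lra.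
    assert (Rabs d * p <= e * (2 * s)) by (apply Rmult_le_compat; try lra; apply Rabs_pos). lra. }
  rewrite (Rabs_right (s^2)) by (apply Rle_ge; apply pow_le; lra).
  rewrite (Rabs_right (1 + p^2)) by (apply Rle_ge; nra).
  assert (1 + p^2 <= 5 * s^2) by nra.
  assert (0 <= Rabs (g - d*p)) by apply Rabs_pos.
  assert ((1 + p^2) * Rabs (g - d * p) <= 5 * s^2 * (e * (1 + 2 * s))).
  { apply Rmult_le_compat; nra. }
  assert (s^2 * ((1 + p^2) * Rabs (g - d * p)) <= s^2 * (5 * s^2 * (e * (1 + 2 * s)))).
  { apply Rmult_le_compat_l; [nra|auto]. }
  assert (s^2 * (5 * s^2 * (e * (1 + 2 * s))) = 5 * (e * s^4) + 10 * (e * s^5)) by ring.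
  lra.
Qed.

Lemma L3 : s/2 < p < 2 * s -> 0 <= G - 1 -> Gd <= -1.
Proof.
  intros Hp HG. rewrite Gd_eq. destruct rfacts as (R0 & R1 & R2).
  generalize (Ebound Hp); intro HE. apply Rabs_le_inv in HE.
  unfold G in HG.
  set (w := p - s + /s) in *.
  assert (Hw : /s * /s <= w).
  { apply Rmult_le_reg_r with (s^2); [nra|].
    replace (/s * /s * s^2) with ((s * /s) * (s * /s)) by ring. rewrite R1. lra. }
  set (A := (1 + p ^ 2) * s - p - 3 * s).
  assert (HA : A >= s^3 / 8) by (unfold A; nra).
  assert (w * A >= /s * /s * (s^3/8)) by (apply Rmult_ge_compat; nra).
  replace (/s * /s * (s^3/8)) with ((s * /s) * (s * /s) * s / 8) in H by (unfold Rdiv; simpl; ring).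
  rewrite R1 in H.
  assert ((p + s) * /s >= 0) by nra.
  lra.
Qed.

Lemma L4 : s/2 < p < 2 * s -> 0 <= - G - 1 -> - Gd <= -1.
Proof.
  intros Hp HG. rewrite Gd_eq. destruct rfacts as (R0 & R1 & R2).
  generalize (Ebound Hp); intro HE. apply Rabs_le_inv in HE.
  unfold G in HG.
  set (w := p - s + /s) in *.
  assert (Hw : /s * /s <= - w).
  { apply Rmult_le_reg_r with (s^2); [nra|].
    replace (/s * /s * s^2) with ((s * /s) * (s * /s)) by ring. rewrite R1. lra. }
  set (A := (1 + p ^ 2) * s - p - 3 * s).
  assert (HA : A >= s^3 / 8) by (unfold A; nra).
  assert (- w * A >= /s * /s * (s^3/8)) by (apply Rmult_ge_compat; nra).
  replace (/s * /s * (s^3/8)) with ((s * /s) * (s * /s) * s / 8) in H by (unfold Rdiv; simpl; ring).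
  rewrite R1 in H.
  assert ((p + s) * /s <= 3) by nra.
  lra.
Qed.
End Ar.
Lemma dl_val f x l l' : derivable_pt_lim f x l -> l = l' -> derivable_pt_lim f x l'.
Proof. intros H ->; exact H. Qed.

Lemma dG (f : R -> R) u df : derivable_pt_lim f u df ->
  derivable_pt_lim (fun x => f x * x^2 - x^3 + x - 1) u (df * u^2 + f u * (2*u) - 3*u^2 + 1).
Proof.
  intros Hf.
  change (derivable_pt_lim (minus_fct (plus_fct (minus_fct (mult_fct f (fun x => x^2)) (fun x => x^3)) id) (fct_cte 1)) u (df * u^2 + f u * (2*u) - 3*u^2 + 1)).
  eapply dl_val.
  - apply derivable_pt_lim_minus; [|apply derivable_pt_lim_const].
    apply derivable_pt_lim_plus; [|apply derivable_pt_lim_id].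
    apply derivable_pt_lim_minus; [|apply derivable_pt_lim_pow].
    apply derivable_pt_lim_mult; [exact Hf|apply derivable_pt_lim_pow].
  - simpl. ring.
Qed.

Lemma dat (f : R -> R) u df : derivable_pt_lim f u df ->
  derivable_pt_lim (fun x => atan (f x)) u (df / (1 + (f u)^2)).
Proof.
  intros Hf.
  generalize (derivable_pt_lim_comp f atan u _ _ Hf (derivable_pt_lim_atan (f u))).
  unfold comp. intro H. eapply dl_val; [exact H|].
  field. nra.
Qed.

Lemma datn (f : R -> R) u df : derivable_pt_lim f u df ->
  derivable_pt_lim (fun x => - atan (f x)) u (- (df / (1 + (f u)^2))).
Proof.
  intros Hf. apply (derivable_pt_lim_opp (fun x => atan (f x))). apply dat; auto.
Qed.

Lemma dlin (f : R -> R) u df a b : derivable_pt_lim f u df ->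
  derivable_pt_lim (fun x => a * x + b * f x) u (a + b * df).
Proof.
  intros Hf.
  change (derivable_pt_lim (plus_fct (mult_real_fct a id) (mult_real_fct b f)) u (a + b * df)).
  eapply dl_val.
  - apply derivable_pt_lim_plus; apply derivable_pt_lim_scal; [apply derivable_pt_lim_id|exact Hf].
  - ring.
Qed.
Lemma ebound_of (e C s : R) : 1000 <= s -> Rabs C <= s -> e <= C / s^10 -> 0 <= e ->
  e * s^5 <= 1/1000.
Proof.
  intros Hs HC He He0.
  assert (Hp : 0 < s^5) by (apply pow_lt; lra).
  assert (H10 : s^10 = s^5 * s^5) by ring.
  assert (e * s^10 <= C).
  { apply Rle_trans with (C / s^10 * s^10). apply Rmult_le_compat_r; [apply pow_le; lra|auto].
    right. field. lra. }
  assert (C <= Rabs C) by apply Rle_abs.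
  set (x := e * s^5).
  assert (0 <= x) by (unfold x; apply Rmult_le_pos; lra).
  assert (x * s^5 <= s) by (replace (x * s^5) with (e * (s^5 * s^5)) by (unfold x; ring); rewrite H10 in H; lra).
  assert (Hq2 : 1000*1000 <= s^2) by (simpl; nra).
  assert (Hq4 : 1000*1000*1000 <= s^4) by (replace (s^4) with (s^2*s^2) by ring; nra).
  assert (1000*s <= s^5) by (replace (s^5) with (s*s^4) by ring; nra).
  nra.
Qed.

Theorem lemma2p6 (sstar C : R) (gamma delta phi : R -> R)
  (Hsstar : 0 < sstar)
  (Hbound : forall s, sstar <= s -> Rabs (gamma s) + Rabs (delta s) <= C / s ^ 10)
  (Hderiv : forall s, sstar < s ->
      derivable_pt_lim phi s (ode_rhs gamma delta s (phi s)))
  (HC1 : forall s, sstar < s ->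
      continuity_pt (fun t => ode_rhs gamma delta t (phi t)) s) :
  exists K M : R, forall s, M <= s ->
    Rabs (phi s - (s - 1 / s)) <= K / s ^ 2.
Proof.
  set (M0 := sstar + Rabs C + 1000).
  set (e := fun u => Rabs (gamma u) + Rabs (delta u)).
  set (Tu := fun u => T u (gamma u) (delta u) (phi u)).
  set (dphi := fun u => (1 + (phi u)^2) * Tu u).
  assert (HsM : forall u, M0 <= u -> 1000 <= u).
  { intros u Hu. unfold M0 in Hu. generalize (Rabs_pos C). lra. }
  assert (Hg : forall u, Rabs (gamma u) <= e u) by (intros; unfold e; generalize (Rabs_pos (delta u)); lra).
  assert (Hd : forall u, Rabs (delta u) <= e u) by (intros; unfold e; generalize (Rabs_pos (gamma u)); lra).
  assert (He : forall u, M0 <= u -> e u * u^5 <= 1/1000).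
  { intros u Hu. apply ebound_of with C. apply HsM; auto.
    unfold M0 in Hu; generalize (Rabs_pos C); lra.
    apply Hbound. unfold M0 in Hu; generalize (Rabs_pos C); lra.
    unfold e; generalize (Rabs_pos (gamma u)) (Rabs_pos (delta u)); lra. }
  assert (HD : forall u, M0 <= u -> derivable_pt_lim phi u (dphi u)).
  { intros u Hu. eapply dl_val. apply Hderiv. unfold M0 in Hu; generalize (Rabs_pos C); lra.
    unfold dphi, Tu, ode_rhs, T, Rdiv. ring. }
  destruct (enter (fun u => u/2 < phi u) (fun x => atan (phi x)) Tu M0) as [b1 [Hb1 Hb1']].
  { intros u Hu. eapply dl_val. apply dat. apply HD; auto. unfold dphi. field. nra. }
  { intros u. generalize (atan_bound (phi u)) PI_4. lra. }
  { intros u Hu HP. apply (L1 u (gamma u) (delta u) (e u) (phi u)); auto. lra. }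
  assert (P1 : forall s, b1 <= s -> s/2 < phi s).
  { intros s Hs.
    assert (1/2 * s + -1 * phi s < 0); [|lra].
    apply (stay (fun x => 1/2 * x + -1 * phi x) (fun x => 1/2 - dphi x) b1); auto; [|lra|].
    - intros u Hu. eapply dl_val.
      apply (dlin phi u (dphi u) (1/2) (-1)). apply HD; lra. ring.
    - intros u Hu Hz. unfold dphi, Tu.
      generalize (L1' u (gamma u) (delta u) (e u) (phi u) (HsM u ltac:(lra)) (Hg u) (Hd u) (He u ltac:(lra)) ltac:(lra)). lra. }
  destruct (enter (fun u => phi u < 2 * u) (fun x => - atan (phi x)) (fun u => - Tu u) b1) as [b2 [Hb2 Hb2']].
  { intros u Hu. eapply dl_val. apply datn. apply HD; lra. unfold dphi. field. nra. }
  { intros u. generalize (atan_bound (phi u)) PI_4. lra. }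
  { intros u Hu HP. generalize (L2 u (gamma u) (delta u) (e u) (phi u) (HsM u ltac:(lra)) (Hg u) (Hd u) (He u ltac:(lra)) ltac:(lra)).
    unfold Tu. lra. }
  assert (P2 : forall s, b2 <= s -> phi s < 2 * s).
  { intros s Hs.
    assert (-2 * s + 1 * phi s < 0); [|lra].
    apply (stay (fun x => -2 * x + 1 * phi x) (fun x => dphi x - 2) b2); auto; [|lra|].
    - intros u Hu. eapply dl_val.
      apply (dlin phi u (dphi u) (-2) 1). apply HD; lra. ring.
    - intros u Hu Hz. unfold dphi, Tu.
      generalize (L2' u (gamma u) (delta u) (e u) (phi u) (HsM u ltac:(lra)) (Hg u) (Hd u) (He u ltac:(lra)) ltac:(lra)). lra. }
  assert (HD3 : forall u, b2 <= u -> derivable_pt_lim (fun x => phi x * x^2 - x^3 + x - 1) u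
     (Gd u (gamma u) (delta u) (phi u) - 1 + 1)).
  { intros u Hu. eapply dl_val. apply dG. apply HD; lra. unfold Gd, dphi, Tu. ring. }
  destruct (trap (fun x => phi x * x^2 - x^3 + x - 1) (fun u => Gd u (gamma u) (delta u) (phi u) - 1 + 1) b2) as [M3 HM3].
  { auto. }
  { intros u Hu H0. cbv beta in H0 |- *. generalize (HsM u ltac:(lra)); intro Hu1000.
    assert (G u (phi u) - 1 = phi u * u^2 - u^3 + u - 1) by (unfold G; field; lra).
    generalize (L3 u (gamma u) (delta u) (e u) (phi u) (HsM u ltac:(lra)) (Hg u) (Hd u) (He u ltac:(lra))
      (conj (P1 u ltac:(lra)) (P2 u ltac:(lra))) ltac:(lra)). lra. }
  destruct (trap (fun x => - (phi x * x^2 - x^3 + x - 1) - 2) (fun u => - (Gd u (gamma u) (delta u) (phi u) - 1 + 1)) b2) as [M4 HM4].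
  { intros u Hu. eapply dl_val. apply (derivable_pt_lim_minus (fun x => - (phi x * x^2 - x^3 + x - 1)) (fun _ => 2)).
    apply (derivable_pt_lim_opp (fun x => phi x * x^2 - x^3 + x - 1)). apply HD3; auto.
    apply derivable_pt_lim_const. ring. }
  { intros u Hu H0. cbv beta in H0 |- *. generalize (HsM u ltac:(lra)); intro Hu1000.
    assert (G u (phi u) - 1 = phi u * u^2 - u^3 + u - 1) by (unfold G; field; lra).
    generalize (L4 u (gamma u) (delta u) (e u) (phi u) (HsM u ltac:(lra)) (Hg u) (Hd u) (He u ltac:(lra))
      (conj (P1 u ltac:(lra)) (P2 u ltac:(lra))) ltac:(lra)). lra. }
  exists 1, (Rmax b2 (Rmax M3 M4)).
  intros s Hs.
  assert (Hb2s : b2 <= s) by (eapply Rle_trans; [apply Rmax_l|exact Hs]).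
  assert (HM3s : M3 <= s) by (eapply Rle_trans; [eapply Rle_trans; [apply Rmax_l|apply Rmax_r]|exact Hs]).
  assert (HM4s : M4 <= s) by (eapply Rle_trans; [eapply Rle_trans; [apply Rmax_r|apply Rmax_r]|exact Hs]).
  specialize (HM3 s HM3s). specialize (HM4 s HM4s). simpl in HM3, HM4.
  assert (Hs1 : 1000 <= s) by (apply HsM; lra).
  assert (Hs2 : 0 < s^2) by nra.
  assert (Heq : (phi s - (s - 1/s)) * s^2 = phi s * s^2 - s^3 + s) by (field; lra).
  apply Rabs_le.
  split.
  - apply Rmult_le_reg_r with (s^2); auto.
    replace (- (1 / s^2) * s^2) with (-1) by (field; lra). lra.
  - apply Rmult_le_reg_r with (s^2); auto.
    replace (1 / s^2 * s^2) with 1 by (field; lra). lra.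
Qed.
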